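(* Let $d\ge2$. Let $\mathcal P$ be the set of equivalence classes of $\partial\mathbb Z^{d-1}_{\ge1}$ under the relation $x\sim y$ iff the conditional law of $W_1-W_0$ given $W_0=x$ equals that given $W_0=y$, for the gap process of the SBBS with capacity $c=\infty$ and some error probability $\varepsilon_0\in(0,1)$. Then: (0) $\mathcal P=\{p_1,\dots,p_k\}$ is finite and does not depend on the choice of $\varepsilon_0\in(0,1)$; moreover for every $\varepsilon\in(0,1)$ and every capacity $c\in\{1,2,\dots\}\cup\{\infty\}$ the transition kernel of the gap process is homogeneous on each cell $p_j$, i.e. the conditional law of $W_1-W_0$ given $W_0=x$ is the same for all $x\in p_j$; (i) for each $j$ there exist $x^j\in\partial\mathbb Z^{d-1}_{\ge1}$ and a nonempty $I^j\subseteq\{1,\dots,d-1\}$ with $x^j_i=1$ for $i<\min I^j$, $x^j_{\min I^j}=0$, and $p_j=\{y\in\partial\mathbb Z^{d-1}_{\ge1}: y_i=x^j_i\ (i\in I^j),\ y_i\ge x^j_i\ (i\notin I^j)\}$; (ii) after re-indexing, for each $j\in\{1,\dots,d-1\}$, $p_j=\{y\in\partial\mathbb Z^{d-1}_{\ge1}: y_j=0,\ y_{j+1}\ge2,\ y_i\ge1\text{ for }i\notin\{j,j+1\}\}$ (the condition on $y_{j+1}$ being void when $j=d-1$); (iii) if $c\ge d$, then for any $\varepsilon\in(0,1)$ the transition kernels at points of distinct cells are distinct.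
   Context: Stochastic box-ball system (SBBS). Fix an error probability $\varepsilon\in[0,1]$ and a capacity $c\in\{1,2,\dots\}\cup\{\infty\}$. A configuration is $\zeta\in\{0,1\}^{\mathbb N}$, $\mathbb N=\{1,2,\dots\}$, with finitely many $1$'s (balls). Given $\zeta$, the stochastic carrier process $\Gamma$ is defined by $\Gamma(0)=0$ and recursively (with fresh independent randomness at each $k$): $\Gamma(k)=\Gamma(k-1)+1$ with probability $1-\varepsilon$ (and $\Gamma(k)=\Gamma(k-1)$ otherwise) if $\zeta(k)=1$ and $\Gamma(k-1)<c$; $\Gamma(k)=\Gamma(k-1)-1$ if $\zeta(k)=0$ and $\Gamma(k-1)\ge1$; $\Gamma(k)=\Gamma(k-1)$ otherwise. The new configuration is $\zeta'(k)=\mathbf 1(\Gamma(k)-\Gamma(k-1)=-1)+\mathbf 1(\Gamma(k)=\Gamma(k-1),\ \zeta(k)=1)$. Iterating independently gives the SBBS trajectory. With $d$ balls at positions $\zeta^{(1)}_t<\dots<\zeta^{(d)}_t$, the gap process is $W_t=(W^1_t,\dots,W^{d-1}_t)$, $W^i_t=\zeta^{(i+1)}_t-\zeta^{(i)}_t-1$, a time-homogeneous Markov chain on $\mathbb Z^{d-1}_{\ge0}$ (its transition law is translation invariant in the ball configuration, so depends only on the current gap vector). $\partial\mathbb Z^{d-1}_{\ge1}:=\mathbb Z^{d-1}_{\ge0}\setminus\mathbb Z^{d-1}_{\ge1}$ (gap vectors with at least one zero coordinate). *)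

(* Defs.v *)
From HB Require Import structures.
From mathcomp Require Import all_boot all_order all_algebra.
From mathcomp Require Import reals.
Set Implicit Arguments. Unset Strict Implicit. Unset Printing Implicit Defensive.
Import Order.TTheory GRing.Theory Num.Theory.

(* Capacity c in {1,2,...} U {oo}: [Some n] is capacity n, [None] is oo. *)
Definition capacity := option nat.
Definition valid_cap (c : capacity) : bool := if c is Some n then 0 < n else true.
Definition below_cap (c : capacity) (g : nat) : bool :=
  if c is Some n then g < n else true.
Definition cap_ge (c : capacity) (d : nat) : bool :=
  if c is Some n then d <= n else true.

(* Gap vectors in Z^{d-1}_{>=0}; coordinate i : 'I_d.-1 is the paper's i+1. *)
Definition gapvec (d : nat) := 'I_d.-1 -> nat.

Definition bnd d (x : gapvec d) : Prop := exists i, x i = 0%N.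

Definition ball_pos d (x : gapvec d) (i : nat) : nat :=
  (1 + \sum_(j < d.-1 | (j < i)%N) (x j).+1)%N.
Definition config_of d (x : gapvec d) (k : nat) : bool :=
  [exists i : 'I_d, ball_pos x i == k].

(* One deterministic sweep of the carrier over sites k, k+1, ..., given the
   coin outcomes b (b i = true: the i-th ball met is picked up when the carrier
   is not full; this happens with probability 1 - eps).  State: carrier load g,
   number i of balls met so far.  Returns the increasing list of positions of
   the balls of the new configuration zeta' among the swept sites. *)
Fixpoint sweep (c : capacity) (zeta : nat -> bool) (b : nat -> bool)
    (k fuel g i : nat) : seq nat :=
  match fuel with
  | 0 => [::]
  | fuel'.+1 =>
    if zeta k then
      if below_cap c g then
        if b i then sweep c zeta b k.+1 fuel' g.+1 i.+1
        else k :: sweep c zeta b k.+1 fuel' g i.+1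
      else k :: sweep c zeta b k.+1 fuel' g i.+1
    else if (0 < g)%N then k :: sweep c zeta b k.+1 fuel' g.-1 i
    else sweep c zeta b k.+1 fuel' g i
  end.

(* New ball positions after one step (all sites 1 .. last ball + d, beyond
   which the carrier is empty, are swept). *)
Definition new_positions d (c : capacity) (x : gapvec d) (b : {ffun 'I_d -> bool})
  : seq nat :=
  sweep c (config_of x) (fun i => oapp b false (insub i)) 1
        (ball_pos x d.-1 + d.+1) 0 0.

Definition gap_increment d (c : capacity) (x : gapvec d) (b : {ffun 'I_d -> bool})
  (i : 'I_d.-1) : int :=
  let s := new_positions c x b in
  ((nth 0%N s i.+1 - nth 0%N s i).-1)%:Z - (x i)%:Z.

Definition coin_weight (R : realType) d (eps : R) (b : {ffun 'I_d -> bool}) : R :=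
  (\prod_(i < d) (if b i then 1 - eps else eps))%R.

Definition gap_kernel (R : realType) d (eps : R) (c : capacity) (x : gapvec d)
  (z : 'I_d.-1 -> int) : R :=
  (\sum_(b : {ffun 'I_d -> bool})
     coin_weight eps b * ([forall i, gap_increment c x b i == z i])%:R)%R.

Definition law_eq (R : realType) d (eps : R) (c : capacity) (x y : gapvec d) : Prop :=
  forall z, gap_kernel eps c x z = gap_kernel eps c y z.

Definition cls (R : realType) d (eps0 : R) (x y : gapvec d) : Prop :=
  bnd y /\ law_eq eps0 None y x.

(* The explicit cell S_j of part (ii) (j : 'I_d.-1 is the paper's j+1). *)
Definition S_cell d (j : 'I_d.-1) (y : gapvec d) : Prop :=
  y j = 0%N /\
  (forall i : 'I_d.-1, (i : nat) = j.+1 -> (2 <= y i)%N) /\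
  (forall i : 'I_d.-1, i != j -> (i : nat) != j.+1 -> (1 <= y i)%N).

(* Main.v *)
Require Import Defs.
Set Warnings "-notation-overridden,-ambiguous-paths,-parsing".
From HB Require Import structures.
From mathcomp Require Import all_boot all_order all_algebra.
From mathcomp Require Import reals.
From mathcomp Require Import zify.
From Stdlib Require Import FunctionalExtensionality.
Set Implicit Arguments. Unset Strict Implicit. Unset Printing Implicit Defensive.
Import Order.TTheory GRing.Theory Num.Theory.

Definition muf (c : capacity) (b : nat -> bool) (i g : nat) : nat :=
  if below_cap c g && b i then g.+1 else g.

Fixpoint stp (c : capacity) (zeta : nat -> bool) (b : nat -> bool)
    (k fuel g i : nat) : nat * nat :=
  match fuel with
  | 0 => (g, i)
  | fuel'.+1 =>
    if zeta k then stp c zeta b k.+1 fuel' (muf c b i g) i.+1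
    else stp c zeta b k.+1 fuel' g.-1 i
  end.

Lemma sweep_cat c z b n f k g i :
  sweep c z b k (n + f) g i =
  sweep c z b k n g i ++ sweep c z b (k + n) f (stp c z b k n g i).1 (stp c z b k n g i).2.
Proof.
elim: n k g i => [|n IH] k g i /=; first by rewrite addn0.
case: (z k) => /=.
- rewrite /muf; case: (below_cap c g) => /=; [case: (b i) => /=|]; by rewrite IH addSnnS.
- case: g => [|g] /=; by rewrite IH addSnnS.
Qed.

Lemma stp_cat c z b n f k g i :
  stp c z b k (n + f) g i =
  stp c z b (k + n) f (stp c z b k n g i).1 (stp c z b k n g i).2.
Proof.
elim: n k g i => [|n IH] k g i /=; first by rewrite addn0.
idtac.
by case: (z k) => /=; rewrite IH addSnnS.
Qed.

Lemma sweep_ext c z1 z2 b n k g i :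
  (forall t, k <= t < k + n -> z1 t = z2 t) ->
  sweep c z1 b k n g i = sweep c z2 b k n g i.
Proof.
elim: n k g i => [|n IH] k g i H //=.
have Hk : z1 k = z2 k by apply: H; lia.
have H' : forall t, k.+1 <= t < k.+1 + n -> z1 t = z2 t by move=> t Ht; apply: H; lia.
by rewrite Hk !(IH k.+1 _ _ H').
Qed.

Lemma stp_ext c z1 z2 b n k g i :
  (forall t, k <= t < k + n -> z1 t = z2 t) ->
  stp c z1 b k n g i = stp c z2 b k n g i.
Proof.
elim: n k g i => [|n IH] k g i H //=.
have Hk : z1 k = z2 k by apply: H; lia.
have H' : forall t, k.+1 <= t < k.+1 + n -> z1 t = z2 t by move=> t Ht; apply: H; lia.
by rewrite Hk !(IH k.+1 _ _ H').
Qed.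

Lemma sweep_shift c z b n k g i :
  sweep c (fun t => z t.+1) b k n g i = map predn (sweep c z b k.+1 n g i).
Proof.
elim: n k g i => [|n IH] k g i //=.
case: (z k.+1) => /=; first (case: (below_cap c g) => /=; [case: (b i) => /=|]).
all: try (case: g => [|g] /=).
all: by rewrite ?IH.
Qed.

Lemma sweep_cons c z b n k g i :
  size (sweep c z b k n g i) + (stp c z b k n g i).1 + i = g + (stp c z b k n g i).2.
Proof.
elim: n k g i => [|n IH] k g i /=; first by [].
case: (z k) => /=; rewrite /muf.
- case: (below_cap c g) => /=; [case: (b i) => /=|].
  + by have := IH k.+1 g.+1 i.+1; lia.
  + by have := IH k.+1 g i.+1; lia.
  + by have := IH k.+1 g i.+1; lia.
- case: g => [|g] /=.
  + by have := IH k.+1 0 i; lia.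
  + by have := IH k.+1 g i; lia.
Qed.

Lemma sweep_range c z b n k g i :
  all (fun t => k <= t < k + n) (sweep c z b k n g i).
Proof.
elim: n k g i => [|n IH] k g i //=.
have H : forall g i, all (fun t => k <= t < k + n.+1) (sweep c z b k.+1 n g i).
  move=> g' i'; apply: sub_all (IH k.+1 g' i') => t /=; lia.
case: (z k) => /=; first (case: (below_cap c g) => /=; [case: (b i) => /=|]).
all: try (case: g => [|g] /=).
all: rewrite ?H ?andbT //; lia.
Qed.

Lemma stp_empty c z b n k g i :
  (forall t, k <= t < k + n -> z t = false) -> stp c z b k n g i = (g - n, i).
Proof.
elim: n k g i => [|n IH] k g i H /=; first by rewrite subn0.
rewrite H; last by lia.
rewrite IH; last by move=> t Ht; apply: H; lia.
congr pair; lia.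
Qed.

Lemma sweep_nopick c z b n k g i :
  (forall t, i <= t -> b t = false) ->
  count (fun t => ~~ z t) (iota k n) <= g ->
  sweep c z b k n g i = iota k n.
Proof.
elim: n k g i => [|n IH] k g i Hb Hc //=.
move: Hc => /=; case: (z k) => /= Hc.
- rewrite Hb // if_same IH //.
  by move=> t Ht; apply: Hb; lia.
- have -> : 0 < g by lia.
  rewrite IH //; lia.
Qed.

Lemma sweep_cap c (z : nat -> bool) (b : nat -> bool) (d : nat) (P : nat -> nat) :
  (forall j j', j <= j' -> P j <= P j') -> cap_ge c d ->
  forall n k g i, g <= i ->
  (forall t, k <= t -> z t -> exists2 j, i <= j < d & P j = t) ->
  sweep c z b k n g i = sweep None z b k n g i.
Proof.
move=> Pmono Hc; elim=> [|n IH] k g i Hg Hz //=.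
case Hk: (z k).
- have [j Hj Pj] := Hz k (leqnn k) Hk.
  have -> : below_cap c g by move: Hc Hj Hg; clear; case: c => //= m; lia.
  have Hz' : forall i', i' = i.+1 -> forall t, k.+1 <= t -> z t -> exists2 j, i' <= j < d & P j = t.
    move=> i' -> t Ht zt; have [j' Hj' Pj'] := Hz t (ltnW Ht) zt.
    exists j' => //; apply/andP; split; last by case/andP: Hj'.
    case: (ltnP j j') => Hjj; first by case/andP: Hj => ? _; lia.
    have := Pmono _ _ Hjj; lia.
  case: (b i); rewrite ?(IH _ _ _ _ (Hz' _ erefl)) //; lia.
- have Hz' : forall t, k.+1 <= t -> z t -> exists2 j, i <= j < d & P j = t.
    move=> t Ht zt; exact: Hz t (ltnW Ht) zt.
  case: g Hg => [|g] Hg /=; rewrite IH //; lia.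
Qed.

Section Gap.
Variable d : nat.
Implicit Types x : gapvec d.

Definition xn x n : nat := oapp x 0%N (insub n).
Definition bbf (b : {ffun 'I_d -> bool}) n : bool := oapp b false (insub n).

Lemma xnE x (i : 'I_d.-1) : xn x i = x i.
Proof. by rewrite /xn valK. Qed.

Lemma xn_out x n : d.-1 <= n -> xn x n = 0.
Proof. by move=> h; rewrite /xn insubF // ltnNge h. Qed.

Lemma bp0 x : ball_pos x 0 = 1.
Proof. by rewrite /ball_pos big1 // => j; rewrite ltn0. Qed.

Lemma bpS x n : ball_pos x n.+1 = ball_pos x n + (if n < d.-1 then (xn x n).+1 else 0).
Proof.
rewrite /ball_pos -addnA; congr (_ + _).
rewrite big_mkcond [in RHS]big_mkcond /=.
have -> : \sum_(i < d.-1) (if i < n.+1 then (x i).+1 else 0) =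
          \sum_(i < d.-1) ((if i < n then (x i).+1 else 0) + (if val i == n then (x i).+1 else 0)).
  apply: eq_bigr => i _; rewrite ltnS leq_eqVlt orbC.
  case h1: (i < n); case h2: (val i == n) => //=; rewrite ?addn0 //; lia.
rewrite big_split /=; congr (_ + _).
case: ltnP => hn.
- rewrite (bigD1 (Ordinal hn)) //= eqxx big1 ?addn0; first by rewrite (xnE x (Ordinal hn)).
  move=> i /negbTE hi; case: eqP => // hin; exfalso; move: hi; rewrite -val_eqE /= hin eqxx //.
- by rewrite big1 // => i _; case: eqP => // hin; have := ltn_ord i; lia.
Qed.

Fixpoint Lb x n : nat := match n with 0 => 1 | n'.+1 => (Lb x n' - xn x n').+1 end.

Fixpoint lam c x (bb : nat -> bool) n : nat :=
  match n with 0 => 0 | n'.+1 => muf c bb n' (lam c x bb n') - xn x n' end.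

Lemma Lb_gt0 x n : 0 < Lb x n. Proof. by case: n. Qed.

Lemma Lb_le x n : Lb x n <= n.+1.
Proof. elim: n => //= n IH; lia. Qed.

Lemma muf_le c bb i g : muf c bb i g <= g.+1.
Proof. by rewrite /muf; case: ifP. Qed.

Lemma mu_le_Lb c x bb n : muf c bb n (lam c x bb n) <= Lb x n.
Proof.
elim: n => [|n IH] /=; first by apply: muf_le.
have := muf_le c bb n.+1 (muf c bb n (lam c x bb n) - xn x n); lia.
Qed.

Lemma P_mono x m n : m <= n -> ball_pos x m <= ball_pos x n.
Proof.
move=> /subnK <-; elim: (n - m) => [|k IH]; first by rewrite add0n.
by rewrite addSn bpS; lia.
Qed.

Lemma P_gt0 x n : 0 < ball_pos x n.
Proof. by have := P_mono x (leq0n n); rewrite bp0. Qed.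

Lemma cfg_ball x j : j < d -> config_of x (ball_pos x j).
Proof. by move=> hj; apply/existsP; exists (Ordinal hj). Qed.

Lemma cfg_inv x t : config_of x t -> exists2 j, j < d & ball_pos x j = t.
Proof. by case/existsP=> j /eqP <-; exists j. Qed.

Lemma cfg_gap x j t : j < d.-1 -> ball_pos x j < t < ball_pos x j.+1 -> config_of x t = false.
Proof.
move=> hj ht; apply/negbTE/negP => H; have [i hi Pi] := cfg_inv H.
case: (leqP i j) => hij.
- have := P_mono x hij; lia.
- have := P_mono x hij; lia.
Qed.

Lemma cfg_end x t : ball_pos x d.-1 < t -> config_of x t = false.
Proof.
move=> ht; apply/negbTE/negP => H; have [i hi Pi] := cfg_inv H.
have : i <= d.-1 by lia.
move/(P_mono x); lia.
Qed.

Lemma stp1 c (z : nat -> bool) bb k g i : z k -> stp c z bb k 1 g i = (muf c bb i g, i.+1).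
Proof. by move=> /= ->. Qed.

Lemma trace c x b j : j < d ->
  stp c (config_of x) (bbf b) 1 (ball_pos x j).-1 0 0 = (lam c x (bbf b) j, j).
Proof.
elim: j => [|j IH] hj; first by rewrite bp0.
have hj' : j < d.-1 by lia.
have E : (ball_pos x j.+1).-1 = (ball_pos x j).-1 + 1 + xn x j.
  rewrite bpS hj'; have := P_gt0 x j; lia.
have P1 : 1 + (ball_pos x j).-1 = ball_pos x j by have := P_gt0 x j; lia.
rewrite E stp_cat stp_cat IH; last by lia.
rewrite P1 stp1; last by apply: cfg_ball; lia.
rewrite stp_empty; first by [].
move=> t ht; apply: (cfg_gap hj'); rewrite bpS hj'; have := P_gt0 x j; lia.
Qed.

Definition Fuel x := (ball_pos x d.-1 + d.+1)%N.

Lemma full_stp c x b : 0 < d ->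
  stp c (config_of x) (bbf b) 1 (Fuel x) 0 0 = (0, d).
Proof.
move=> d0.
have E : Fuel x = (ball_pos x d.-1).-1 + 1 + d.+1 by rewrite /Fuel; have := P_gt0 x d.-1; lia.
have P1 : 1 + (ball_pos x d.-1).-1 = ball_pos x d.-1 by have := P_gt0 x d.-1; lia.
rewrite E stp_cat stp_cat trace; last by lia.
rewrite P1 stp1; last by apply: cfg_ball; lia.
rewrite stp_empty; last by move=> t ht; apply: cfg_end; have := P_gt0 x d.-1; lia.
have := mu_le_Lb c x (bbf b) d.-1; have := Lb_le x d.-1.
move=> h1 h2; cbn [fst snd]; congr pair; lia.
Qed.

Lemma npE c x b : new_positions c x b = sweep c (config_of x) (bbf b) 1 (Fuel x) 0 0.
Proof. by []. Qed.

Lemma size_newpos c x b : 0 < d -> size (new_positions c x b) = d.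
Proof.
move=> d0; have := sweep_cons c (config_of x) (bbf b) (Fuel x) 1 0 0.
by rewrite full_stp // npE; cbn [fst snd]; lia.
Qed.

End Gap.

Lemma nth_pred (B : seq nat) n : nth 0 (map predn B) n = (nth 0 B n).-1.
Proof.
case: (ltnP n (size B)) => h; first by rewrite (nth_map 0).
by rewrite nth_default ?size_map // nth_default.
Qed.

Lemma nth_shift (A B : seq nat) K j i :
  size A = j.+1 -> all (fun t => t < K) A -> all (fun t => K < t) B -> 0 < size B ->
  (nth 0 (A ++ map predn B) i.+1 - nth 0 (A ++ map predn B) i).-1 + (i == j)
  = (nth 0 (A ++ B) i.+1 - nth 0 (A ++ B) i).-1.
Proof.
move=> hA aA aB hB.
have inA : forall n, n < size A -> nth 0 A n < K by move=> n hn; exact: (allP aA) _ (mem_nth 0 hn).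
have inB : forall n, n < size B -> K < nth 0 B n by move=> n hn; exact: (allP aB) _ (mem_nth 0 hn).
have outB : forall n, size B <= n -> nth 0 B n = 0 by move=> n hn; rewrite nth_default.
rewrite !nth_cat !nth_pred hA.
case: (ltngtP i j) => hij.
- have -> : i < j.+1 by lia.
  have -> : i.+1 < j.+1 by lia.
  by rewrite addn0.
- have -> : (i < j.+1) = false by lia.
  have -> : (i.+1 < j.+1) = false by lia.
  rewrite addn0.
  have E : i.+1 - j.+1 = (i - j.+1).+1 by lia.
  rewrite E.
  case: (ltnP (i - j.+1).+1 (size B)) => h1.
  + have := inB _ h1; have : i - j.+1 < size B by lia.
    move/inB; lia.
  + rewrite (outB _ h1); lia.
- subst i; rewrite ltnn ltnSn subnn.
  have := inB 0 hB; have : j < size A by lia.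
  move/inA; lia.
Qed.

Section Dec.
Variable d : nat.
Implicit Types x : gapvec d.

Definition xdec x (j : 'I_d.-1) : gapvec d := fun i => if i == j then (x i).-1 else x i.

Lemma xn_dec x (j : 'I_d.-1) n : xn (xdec x j) n = if n == j then (xn x n).-1 else xn x n.
Proof.
rewrite /xn; case: insubP => [u _ <-|hn] /=; first by rewrite /xdec -val_eqE.
case: eqP => // hnj; exfalso; move: hn; rewrite hnj ltn_ord //.
Qed.

Lemma bp_dec x (j : 'I_d.-1) n : 0 < x j -> ball_pos (xdec x j) n + (j < n) = ball_pos x n.
Proof.
move=> hx; elim: n => [|n IH]; first by rewrite !bp0.
rewrite !bpS xn_dec -IH.
case: eqP => [hn|hn].
- subst n; rewrite ltn_ord ltnn ltnSn xnE; lia.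
- have -> : (j < n.+1) = (j < n) by apply/idP/idP; lia.
  case: (n < d.-1); lia.
Qed.

Lemma cfg_dec_lo x (j : 'I_d.-1) t : 0 < x j -> t < ball_pos x j + x j ->
  config_of (xdec x j) t = config_of x t.
Proof.
move=> hx ht; apply: eq_existsb => i.
have E := bp_dec i hx.
have Pj1 : ball_pos x j.+1 = ball_pos x j + (x j).+1 by rewrite bpS ltn_ord xnE.
case: (leqP i j) => hij.
- have Ej : (j < i) = false by lia.
  by rewrite Ej addn0 in E; rewrite E.
- have := P_mono x (hij : j.+1 <= i); rewrite Pj1 => h.
  rewrite hij in E; apply/eqP/eqP; lia.
Qed.

Lemma cfg_dec_hi x (j : 'I_d.-1) t : 0 < x j -> ball_pos x j + x j <= t ->
  config_of (xdec x j) t = config_of x t.+1.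
Proof.
move=> hx ht; apply: eq_existsb => i.
have E := bp_dec i hx.
case: (leqP i j) => hij.
- have := P_mono x hij; have Ej : (j < i) = false by lia.
  move=> h; rewrite Ej addn0 in E; apply/eqP/eqP; lia.
- rewrite hij in E; apply/eqP/eqP; lia.
Qed.

End Dec.

Lemma sweep_empty1 c (z : nat -> bool) b k n i : z k = false ->
  sweep c z b k n.+1 0 i = sweep c z b k.+1 n 0 i.
Proof. by move=> /= ->. Qed.

Section D1.
Variable d : nat.
Implicit Types x : gapvec d.

Lemma dec_inc c x (j : 'I_d.-1) b : Lb x j < x j ->
  gap_increment c (xdec x j) b =1 gap_increment c x b.
Proof.
move=> hLj.
have hx : 0 < x j by have := Lb_gt0 x j; lia.
have d0 : 0 < d by have := ltn_ord j; lia.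
set K := ball_pos x j + x j.
have hK1 : ball_pos x j.+1 = K.+1 by rewrite bpS ltn_ord xnE /K; lia.
have hPj := P_gt0 x j.
have hKF : K.+1 <= ball_pos x d.-1 by rewrite -hK1; apply: P_mono; have := ltn_ord j; lia.
set F' := Fuel x - K.
have FE : Fuel x = (K - 1) + F'.+1 by rewrite /F' /Fuel; lia.
have FmE : Fuel (xdec x j) = (K - 1) + F'.
  have := bp_dec d.-1 hx; rewrite ltn_ord /F' /Fuel; lia.
set zx := config_of x.
set bb := bbf b.
have st : stp c zx bb 1 (K - 1) 0 0 = (0, j.+1).
  have E : K - 1 = (ball_pos x j).-1 + 1 + (x j - 1) by rewrite /K; lia.
  have P1 : 1 + (ball_pos x j).-1 = ball_pos x j by lia.
  rewrite E stp_cat stp_cat trace; last by have := ltn_ord j; lia.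
  rewrite P1 stp1; last by apply: cfg_ball; have := ltn_ord j; lia.
  rewrite stp_empty; last first.
    move=> t ht; apply: (cfg_gap (ltn_ord j)); rewrite hK1 /K; lia.
  have := mu_le_Lb c x bb j; cbn [fst snd]; rewrite /bb; move=> h; congr pair; lia.
have Aeq : sweep c (config_of (xdec x j)) bb 1 (K - 1) 0 0 = sweep c zx bb 1 (K - 1) 0 0.
  apply: sweep_ext => t ht; apply: cfg_dec_lo => //; rewrite -/K; lia.
have steq : stp c (config_of (xdec x j)) bb 1 (K - 1) 0 0 = stp c zx bb 1 (K - 1) 0 0.
  apply: stp_ext => t ht; apply: cfg_dec_lo => //; rewrite -/K; lia.
set A := sweep c zx bb 1 (K - 1) 0 0.
set B := sweep c zx bb K.+1 F' 0 j.+1.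
have K1 : 1 + (K - 1) = K by rewrite /K; lia.
have npx : new_positions c x b = A ++ B.
  rewrite npE FE sweep_cat -/zx -/bb st K1; cbn [fst snd].
  rewrite sweep_empty1 //; apply: (cfg_gap (ltn_ord j)); rewrite hK1 /K; lia.
have npm : new_positions c (xdec x j) b = A ++ map predn B.
  rewrite npE FmE sweep_cat -/bb Aeq steq st K1; cbn [fst snd]; congr (_ ++ _).
  rewrite -sweep_shift; apply: sweep_ext => t ht; apply: cfg_dec_hi => //; rewrite -/K; lia.
have hA : size A = j.+1.
  have := sweep_cons c zx bb (K - 1) 1 0 0; rewrite st /=; rewrite -/A; lia.
have aA : all (fun t => t < K) A.
  apply: sub_all (sweep_range c zx bb (K - 1) 1 0 0) => t /=; lia.
have aB : all (fun t => K < t) B.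
  apply: sub_all (sweep_range c zx bb F' K.+1 0 j.+1) => t /=; lia.
have hB : 0 < size B.
  have := size_newpos c x b d0; rewrite npx size_cat hA; have := ltn_ord j; lia.
move=> i; rewrite /gap_increment; cbv zeta; rewrite npx npm.
have := nth_shift i hA aA aB hB.
rewrite /xdec; case: (i =P j) => [->|hij].
- rewrite eqxx addn1 => h.
  rewrite -h; move: hx; case: (x j) => // n _ /=; lia.
- have -> : (val i == val j) = false by rewrite val_eqE; apply/eqP.
  by rewrite addn0 => ->.
Qed.

End D1.

Section Inv.
Variable d : nat.
Implicit Types x y : gapvec d.

Definition Tv x : gapvec d := fun i => minn (x i) (Lb x i).
Definition red x := forall i : 'I_d.-1, x i <= Lb x i.

Lemma xn_Tv x n : xn (Tv x) n = minn (xn x n) (Lb x n).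
Proof. by rewrite /xn; case: insubP => [u _ <-|_] //=; rewrite min0n. Qed.

Lemma Lb_Tv x n : Lb (Tv x) n = Lb x n.
Proof. elim: n => //= n ->; rewrite xn_Tv; lia. Qed.

Lemma Tv_red x : red (Tv x).
Proof. by move=> i; rewrite Lb_Tv /Tv geq_minr. Qed.

Lemma red_Tv x : red x -> Tv x = x.
Proof. by move=> h; apply: functional_extensionality => i; rewrite /Tv; apply/minn_idPl. Qed.

Lemma Tv_idem x : Tv (Tv x) = Tv x.
Proof. exact: red_Tv (Tv_red x). Qed.

Lemma Lb_dec x (j : 'I_d.-1) n : Lb x j < x j -> Lb (xdec x j) n = Lb x n.
Proof.
move=> h; elim: n => //= n ->; rewrite xn_dec; case: eqP => // hn.
move: hn => ->; rewrite xnE; lia.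
Qed.

Lemma Tv_dec x (j : 'I_d.-1) : Lb x j < x j -> Tv (xdec x j) = Tv x.
Proof.
move=> h; apply: functional_extensionality => i; rewrite /Tv Lb_dec // /xdec.
case: eqP => // ->; rewrite /minn; case: ltnP; case: ltnP; lia.
Qed.

Lemma sum_dec x (j : 'I_d.-1) : 0 < x j -> (\sum_(i < d.-1) xdec x j i).+1 = \sum_(i < d.-1) x i.
Proof.
move=> h; rewrite (bigD1 j) // [in RHS](bigD1 j) //= /xdec eqxx.
rewrite (eq_bigr (fun i => x i)); last by move=> i /negbTE ->.
lia.
Qed.

Lemma inv_inc c b x : gap_increment c x b =1 gap_increment c (Tv x) b.
Proof.
move: {2}(\sum_(i < d.-1) x i) (leqnn (\sum_(i < d.-1) x i)) => n.
elim: n x => [|n IH] x hs.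
- have -> : Tv x = x; last by [].
  apply: red_Tv => i; have : x i <= \sum_(i < d.-1) x i by rewrite (bigD1 i) //=; lia.
  by have := Lb_gt0 x i; lia.
- case hr: [forall i, x i <= Lb x i].
  + by rewrite red_Tv // => i; move/forallP: hr.
  + move/negbT: hr; rewrite negb_forall => /existsP [j]; rewrite -ltnNge => hj.
    have hx : 0 < x j by have := Lb_gt0 x j; lia.
    move=> i; rewrite -(dec_inc c b hj i) -(Tv_dec hj) IH //.
    have := sum_dec hx; lia.
Qed.

Lemma kernel_Tv (R : realType) (eps : R) c x z :
  gap_kernel eps c x z = gap_kernel eps c (Tv x) z.
Proof.
apply: eq_bigr => b _; congr (_ * (nat_of_bool _)%:R)%R.
by apply: eq_forallb => i; rewrite inv_inc.
Qed.

Lemma law_Tv (R : realType) (eps : R) c x y : Tv x = Tv y -> law_eq eps c x y.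
Proof. by move=> h z; rewrite kernel_Tv h -kernel_Tv. Qed.

End Inv.

Section D2.
Variable d : nat.
Implicit Types x y : gapvec d.

Definition bstar (i : 'I_d.-1) : {ffun 'I_d -> bool} := [ffun t : 'I_d => (t <= i)].

Lemma bbf_bstar (i : 'I_d.-1) t : bbf (bstar i) t = (t <= i).
Proof.
rewrite /bbf; case: insubP => [u _ <-|ht] /=; first by rewrite ffunE.
by apply/esym/negbTE; move: ht; have := ltn_ord i; lia.
Qed.

Lemma mu_bstar x (i : 'I_d.-1) t : t <= i ->
  muf None (bbf (bstar i)) t (lam None x (bbf (bstar i)) t) = Lb x t.
Proof.
elim: t => [|t IH] ht; first by rewrite /muf bbf_bstar.
have IH' := IH (ltnW ht).
rewrite {1}/muf bbf_bstar ht /=.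
change (lam None x (bbf (bstar i)) t.+1) with
  (muf None (bbf (bstar i)) t (lam None x (bbf (bstar i)) t) - xn x t).
by rewrite IH'.
Qed.

Lemma d2 x (i : 'I_d.-1) : x i <= Lb x i ->
  gap_increment None x (bstar i) i = (- (x i)%:Z)%R.
Proof.
move=> hxi.
have hi := ltn_ord i.
set L := Lb x i.
have hL1 : 0 < L by apply: Lb_gt0.
have hL2 : L <= i.+1 by apply: Lb_le.
set bb := bbf (bstar i).
set zx := config_of x.
have hPi := P_gt0 x i.
have hPd : ball_pos x i <= ball_pos x d.-1 by apply: P_mono; lia.
have hPi1 : ball_pos x i.+1 = ball_pos x i + (x i).+1 by rewrite bpS hi xnE.
set f := Fuel x - (ball_pos x i + L.+1).
have FE : Fuel x = ball_pos x i + (L.+1 + f) by rewrite /f /Fuel; lia.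
have st : stp None zx bb 1 (ball_pos x i) 0 0 = (L, i.+1).
  have E : ball_pos x i = (ball_pos x i).-1 + 1 by lia.
  rewrite {1}E stp_cat trace; last by lia.
  have P1 : 1 + (ball_pos x i).-1 = ball_pos x i by lia.
  rewrite P1 stp1; last by apply: cfg_ball; lia.
  by rewrite mu_bstar.
set A := sweep None zx bb 1 (ball_pos x i) 0 0.
have hA : size A = i.+1 - L.
  have := sweep_cons None zx bb (ball_pos x i) 1 0 0; rewrite st -/A /=; lia.
have run : sweep None zx bb (1 + ball_pos x i) L.+1 L i.+1 = iota (1 + ball_pos x i) L.+1.
  apply: sweep_nopick.
    by move=> t ht; rewrite /bb bbf_bstar; lia.
  set s := iota (1 + ball_pos x i) L.+1.
  have hc : 0 < count zx s.
    rewrite -has_count; apply/hasP; exists (ball_pos x i.+1).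
      by rewrite mem_iota hPi1; lia.
    by apply: cfg_ball; lia.
  have E := count_predC zx s.
  have -> : count (fun t => ~~ zx t) s = count (predC zx) s by [].
  rewrite size_iota in E; lia.
have np : new_positions None x (bstar i) =
          A ++ (iota (1 + ball_pos x i) L.+1 ++
                sweep None zx bb (1 + ball_pos x i + L.+1) f
                  (stp None zx bb (1 + ball_pos x i) L.+1 L i.+1).1
                  (stp None zx bb (1 + ball_pos x i) L.+1 L i.+1).2).
  by rewrite npE FE sweep_cat -/zx -/bb -/A st; cbn [fst snd]; rewrite sweep_cat run.
rewrite /gap_increment; cbv zeta; rewrite np !nth_cat hA.
have -> : (i < i.+1 - L) = false by lia.
have -> : (i.+1 < i.+1 - L) = false by lia.
rewrite size_iota.
have -> : (i - (i.+1 - L) < L.+1) by lia.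
have -> : (i.+1 - (i.+1 - L) < L.+1) by lia.
by rewrite !nth_iota; lia.
Qed.

End D2.

Section Dist.
Variable d : nat.
Implicit Types x y : gapvec d.

Lemma np_cap c x b : cap_ge c d -> new_positions c x b = new_positions None x b.
Proof.
move=> hc; rewrite !npE.
apply: (@sweep_cap c _ _ d (ball_pos x)) => //.
- by move=> j j'; apply: P_mono.
- move=> t _ ht; have [j hj Pj] := cfg_inv ht; by exists j.
Qed.

Lemma kernel_cap (R : realType) (eps : R) c x z : cap_ge c d ->
  gap_kernel eps c x z = gap_kernel eps None x z.
Proof.
move=> hc; apply: eq_bigr => b _; congr (_ * (nat_of_bool _)%:R)%R.
by apply: eq_forallb => i; rewrite /gap_increment; cbv zeta; rewrite (np_cap _ _ hc).
Qed.

Lemma law_cap (R : realType) (eps : R) c x y : cap_ge c d -> law_eq eps c x y -> law_eq eps None x y.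
Proof. by move=> hc h z; rewrite -!(kernel_cap _ _ _ hc). Qed.

Local Open Scope ring_scope.

Lemma coin_weight_gt0 (R : realType) (eps : R) (b : {ffun 'I_d -> bool}) : 0 < eps < 1 -> 0 < coin_weight eps b.
Proof.
case/andP=> h0 h1; apply: prodr_gt0 => i _; case: ifP => _ //.
by rewrite subr_gt0.
Qed.

Lemma kernel_pos (R : realType) (eps : R) c x b : 0 < eps < 1 ->
  0 < gap_kernel eps c x (gap_increment c x b).
Proof.
move=> he; rewrite /gap_kernel (bigD1 b) //=.
have -> : [forall i, gap_increment c x b i == gap_increment c x b i] by apply/forallP => i.
rewrite mulr1; apply: (lt_le_trans (coin_weight_gt0 b he)).
rewrite lerDl; apply: sumr_ge0 => b' _; apply: mulr_ge0 => //.
by apply: ltW; apply: coin_weight_gt0.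
Qed.

Lemma kernel_zero (R : realType) (eps : R) c x z :
  (forall b, exists i, gap_increment c x b i != z i) -> gap_kernel eps c x z = 0.
Proof.
move=> h; rewrite /gap_kernel big1 // => b _.
have [i hi] := h b.
have -> : [forall i, gap_increment c x b i == z i] = false.
  by apply/negbTE; rewrite negb_forall; apply/existsP; exists i.
by rewrite mulr0.
Qed.

Lemma inc_ge c x b i : (- (x i)%:Z <= gap_increment c x b i)%R.
Proof. rewrite /gap_increment; cbv zeta; lia. Qed.

Lemma dist_aux (R : realType) (eps : R) x y (i : 'I_d.-1) : 0 < eps < 1 ->
  (y i <= Lb y i)%N -> (x i < y i)%N -> ~ law_eq eps None x y.
Proof.
move=> he hy hxy h.
have := h (gap_increment None y (bstar i)).
rewrite kernel_zero; last first.
  move=> b; exists i; rewrite d2 //; apply/eqP => e.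
  have := inc_ge None x b i; rewrite e; lia.
move=> e; have := kernel_pos None y (bstar i) he; rewrite -e; by rewrite ltxx.
Qed.

Lemma dist (R : realType) (eps : R) x y : 0 < eps < 1 -> law_eq eps None x y -> Tv x = Tv y.
Proof.
move=> he h.
have h' : law_eq eps None (Tv x) (Tv y) by move=> z; rewrite -!kernel_Tv.
apply: functional_extensionality => i.
case: (ltngtP (Tv x i) (Tv y i)) => // hi; exfalso.
- by apply: (dist_aux he (Tv_red y i) hi).
- apply: (dist_aux he (Tv_red x i) hi) => z; by rewrite h'.
Qed.

End Dist.

Section Cls.
Variable d : nat.
Implicit Types x y r : gapvec d.

Lemma cls_min (R : realType) (eps : R) r y : (0 < eps < 1)%R -> red r ->
  cls eps r y <-> bnd y /\ forall i, minn (y i) (Lb r i) = r i.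
Proof.
move=> he hr; split.
- case=> hb hl; split => // i.
  have := dist he hl; rewrite (red_Tv hr) => hT.
  by rewrite -hT Lb_Tv.
- case=> hb hm; split => //.
  have hxn : forall n, xn r n = minn (xn y n) (Lb r n).
    move=> n; rewrite /xn; case: insubP => [u _ <-|_] /=; first by rewrite hm.
    by rewrite min0n.
  have hL : forall n, Lb y n = Lb r n.
    elim=> //= n ->; rewrite hxn; lia.
  apply: law_Tv; rewrite (red_Tv hr).
  by apply: functional_extensionality => i; rewrite /Tv hL hm.
Qed.

Lemma Lb_one r t : (forall n, n < t -> xn r n != 0) -> Lb r t = 1.
Proof.
elim: t => //= t IH h; rewrite IH; last by move=> n hn; apply: h; lia.
have := h t (ltnSn t); lia.
Qed.

Definition FT := {ffun 'I_d.-1 -> 'I_d.+1}.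
Definition gv (f : FT) : gapvec d := fun i => nat_of_ord (f i).
Definition goodb (f : FT) : bool :=
  [forall i, nat_of_ord (f i) <= Lb (gv f) i] && [exists i, nat_of_ord (f i) == 0].
Definition SS := [set f : FT | goodb f].

Lemma SS_good f : f \in SS -> red (gv f) /\ bnd (gv f).
Proof.
rewrite inE => /andP [/forallP h1 /existsP [i /eqP hi]]; split => //.
by exists i.
Qed.

Lemma to_ffun x : red x -> bnd x -> exists2 f, f \in SS & gv f = x.
Proof.
move=> hr hb.
have hle : forall i : 'I_d.-1, x i < d.+1.
  move=> i; have := hr i; have := Lb_le x i; have := ltn_ord i; lia.
have hg : gv [ffun i => inord (x i)] = x.
  by apply: functional_extensionality => i; rewrite /gv ffunE (inordK (hle i)).
exists [ffun i => inord (x i)]; last by [].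
- rewrite inE /goodb hg; apply/andP; split.
  + apply/forallP => i; rewrite ffunE (inordK (hle i)); exact: hr i.
  + by case: hb => i hi; apply/existsP; exists i; rewrite ffunE (inordK (hle i)) hi.
Qed.

End Cls.

Section Scell.
Variable d : nat.
Variable j : 'I_d.-1.

Definition svec : gapvec d := fun i =>
  if (i < j)%N then 1 else if (i == j :> nat) then 0 else if (i == j.+1 :> nat) then 2 else 1.

Lemma xn_svec n : n < d.-1 ->
  xn svec n = (if n < j then 1 else if n == j then 0 else if n == j.+1 then 2 else 1).
Proof. by move=> hn; rewrite /xn insubT. Qed.

Lemma Lb_svec n : n <= d.-1 -> Lb svec n = if n == j.+1 then 2 else 1.
Proof.
elim: n => [|n IH] hn /=; first by [].
rewrite IH ?xn_svec; try lia.
by do ![case: ifP => ?]; lia.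
Qed.

Lemma svec_red : red svec.
Proof.
move=> i; rewrite Lb_svec; last by have := ltn_ord i; lia.
by rewrite /svec; do ![case: ifP => ?]; lia.
Qed.

Lemma svec_bnd : bnd svec.
Proof. by exists j; rewrite /svec ltnn eqxx. Qed.

Lemma svec_cell (y : gapvec d) :
  (bnd y /\ forall i, minn (y i) (Lb svec i) = svec i) <-> S_cell j y.
Proof.
have hL : forall i : 'I_d.-1, Lb svec i = if (i == j.+1 :> nat) then 2 else 1.
  by move=> i; rewrite Lb_svec //; have := ltn_ord i; lia.
split.
- case=> _ h; split; [|split].
  + have := h j; rewrite hL /svec; do ![case: ifP => ?]; lia.
  + move=> i hi; have := h i; rewrite hL /svec; do ![case: ifP => ?]; lia.
  + move=> i hij hij1; move/negbTE: hij1 => hij1.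
    have hij' : (i == j :> nat) = false by apply/negbTE/eqP => e; move/eqP: hij; apply; apply: ord_inj.
    have := h i; rewrite hL /svec; do ![case: ifP => ?]; lia.
- case=> h0 [h2 h1]; split; first by exists j.
  move=> i; rewrite hL /svec.
  case: (ltnP i j) => hij.
  + have hne : i != j by apply/eqP => e; move: hij; rewrite e ltnn.
    have hne1 : (i : nat) != j.+1 by apply/eqP => e; move: hij; rewrite e; lia.
    have := h1 i hne hne1; do ![case: ifP => ?]; lia.
  + case: (i =P j) => [->|hj].
    * rewrite h0; do ![case: ifP => ?]; lia.
    * have hj' : (i == j :> nat) = false by apply/negbTE; rewrite val_eqE; apply/eqP.
      case: (eqVneq (i : nat) j.+1) => hj1.
      - have := h2 i hj1; do ![case: ifP => ?]; lia.
      - have hne : i != j by apply/eqP.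
        have := h1 i hne hj1; do ![case: ifP => ?]; lia.
Qed.

End Scell.

Lemma first_zero d (r : gapvec d) : bnd r ->
  exists m : 'I_d.-1, r m = 0 /\ forall i : 'I_d.-1, i < m -> r i != 0.
Proof.
case=> i0 hi0.
have exP : exists n, (n < d.-1) && (xn r n == 0) by exists i0; rewrite ltn_ord xnE hi0.
case: (ex_minnP exP) => m /andP [hm /eqP hz] hmin.
exists (Ordinal hm); split; first by rewrite -(xnE r (Ordinal hm)).
move=> i hi; apply/negP => /eqP e.
have := hmin i; rewrite ltn_ord xnE e eqxx /= => h; have := h erefl; simpl in hi; lia.
Qed.

Local Open Scope ring_scope.
Unset Implicit Arguments.

Theorem lemma6p2 (R : realType) (d : nat) (eps0 : R) :
  (2 <= d)%N -> 0 < eps0 < 1 ->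
  exists (k : nat) (r : 'I_k -> gapvec d),
    (* r enumerates representatives of the classes, one per class *)
    (forall j, bnd (r j)) /\
    (forall x : gapvec d, bnd x -> exists j, law_eq eps0 None x (r j)) /\
    (forall j m, law_eq eps0 None (r j) (r m) -> j = m) /\
    (* (0) the partition does not depend on eps0 *)
    (forall eps1 : R, 0 < eps1 < 1 -> forall x y : gapvec d, bnd x -> bnd y ->
        (law_eq eps0 None x y <-> law_eq eps1 None x y)) /\
    (* (0) homogeneity on each cell, for all eps and all capacities *)
    (forall (eps : R) (c : capacity), 0 < eps < 1 -> valid_cap c ->
        forall x y : gapvec d, bnd x -> bnd y -> law_eq eps0 None x y -> law_eq eps c x y) /\
    (* (i) shape of the cells *)
    (forall j, exists (xj : gapvec d) (I : {set 'I_d.-1}) (m : 'I_d.-1),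
        bnd xj /\ m \in I /\ (forall i, i \in I -> (m <= i)%N) /\
        (forall i : 'I_d.-1, (i < m)%N -> xj i = 1%N) /\ xj m = 0%N /\
        (forall y : gapvec d, cls eps0 (r j) y <->
           (bnd y /\ forall i, (i \in I -> y i = xj i) /\
                               (i \notin I -> (xj i <= y i)%N)))) /\
    (* (ii) the cells S_j *)
    (forall j : 'I_d.-1, exists m : 'I_k, forall y : gapvec d, cls eps0 (r m) y <-> S_cell j y) /\
    (* (iii) distinct cells have distinct kernels when c >= d *)
    (forall (c : capacity) (eps : R), cap_ge c d -> 0 < eps < 1 ->
        forall x y : gapvec d, bnd x -> bnd y -> law_eq eps c x y -> law_eq eps0 None x y).
Proof.
move=> hd he0.
pose S := SS d.
exists #|S|, (fun j => gv (enum_val j)).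
have hgood : forall j : 'I_#|S|, red (gv (enum_val j)) /\ bnd (gv (enum_val j)).
  by move=> j; apply: SS_good; exact: enum_valP.
split; first by move=> j; case: (hgood j).
split.
  move=> x hb.
  have hbT : bnd (Tv x) by case: hb => i hi; exists i; rewrite /Tv hi min0n.
  have [f fS hf] := to_ffun (Tv_red x) hbT.
  exists (enum_rank_in fS f); rewrite enum_rankK_in // hf.
  by apply: law_Tv; rewrite Tv_idem.
split.
  move=> j m h; have := dist he0 h.
  rewrite !red_Tv; try by case: (hgood j); try by case: (hgood m).
  move=> e; apply: enum_val_inj; apply/ffunP => i; apply: ord_inj.
  exact: (congr1 (fun g => g i) e).
split.
  move=> eps1 he1 x y _ _; split => h.
  + by apply: law_Tv; apply: dist he0 h.
  + by apply: law_Tv; apply: dist he1 h.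
split.
  by move=> eps c he hc x y _ _ h; apply: law_Tv; apply: dist he0 h.
split.
  move=> j; case: (hgood j) => hr hb; move: hr hb; move: (gv (enum_val j)) => r hr hb.
  have [m [hm0 hmin]] := first_zero hb.
  exists r, [set i | (r i < Lb r i)%N], m.
  have hlt : forall i : 'I_d.-1, (i < m)%N -> r i = 1%N /\ Lb r i = 1%N.
    move=> i hi.
    have hL : Lb r i = 1%N.
      apply: Lb_one => n hn; rewrite /xn; case: insubP => [u _ hu|hn'] /=; last by have := ltn_ord i; lia.
      apply: hmin; rewrite hu; lia.
    have h0 := hmin i hi; rewrite -lt0n in h0; split => //; have := hr i; rewrite hL; lia.
  split => //.
  split; first by rewrite inE hm0; apply: Lb_gt0.
  split.
    move=> i; rewrite inE => hi; case: (ltnP i m) => // him.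
    by have [h1 h2] := hlt i him; move: hi; rewrite h1 h2 ltnn.
  split; first by move=> i hi; case: (hlt i hi).
  split => // y.
  rewrite (cls_min _ he0 hr); split.
  + case=> hby h; split => // i; rewrite inE; have := h i; have := hr i.
    split => hi; lia.
  + case=> hby h; split => // i; have [h1 h2] := h i; have := hr i.
    move: h1 h2; rewrite inE; case: ltnP => hi h1 h2 hri.
    * by rewrite h1 //; apply/minn_idPl; lia.
    * have := h2 erefl; rewrite /minn; case: ltnP; lia.
split.
  move=> j.
  have [f fS hf] := to_ffun (svec_red j) (svec_bnd j).
  exists (enum_rank_in fS f) => y; rewrite enum_rankK_in // hf.
  by rewrite (cls_min _ he0 (svec_red j)) svec_cell.
move=> c eps hc he x y _ _ h.
by apply: law_Tv; apply: (dist he); apply: (law_cap hc h).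
Qed.
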